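(* Let $P$ and $Q$ be finite $(3+1)$-free posets with the same skeleton. Suppose $P$ and $Q$ have compatible listings $(X_1,\dots,X_m)$ and $(Y_1,\dots,Y_m)$ that yield the same word $w\in\Sigma^*$, and that for each $i$, if $X_i$ (equivalently $Y_i$) is a clone set then $|X_i|=|Y_i|$, and if $X_i$ is a tangle then $X_i$ and $Y_i$ are isomorphic as induced subposets. Then $P\cong Q$. In other words, a $(3+1)$-free poset is determined up to isomorphism by its skeleton together with, for each letter of the skeleton, the cardinality of the corresponding clone set or the isomorphism class of the corresponding tangle.
   Context: A poset $P$ is $(3+1)$-free if there are no $a,b,c,d\in P$ with $a<b<c$ and $d$ incomparable to each of $a,b,c$. For $a\in P$ let $D_a=\{x\in P:x<a\}$, $U_a=\{x\in P:x>a\}$. Write $a\mathrel{\top}b$ if neither of $D_a,D_b$ contains the other, $a\mathrel{\bot}b$ if neither of $U_a,U_b$ contains the other, and $a\approx b$ if $D_a=D_b$ and $U_a=U_b$. A top of a tangle is a subset $A\subseteq P$ with $|A|\ge2$ that is a connected component of the graph on $P$ with edges $\{a,b\}$ for $a\mathrel{\top}b$; a bottom of a tangle is defined likewise using $\bot$. A top $A$ and bottom $B$ are matched if there are distinct $a_1,a_2\in A$, $b_1,b_2\in B$ with $b_1<a_1$, $b_2<a_2$ and the pairs $\{a_1,a_2\},\{b_1,b_2\},\{b_1,a_2\},\{b_2,a_1\}$ incomparable; in a $(3+1)$-free poset this is a perfect matching. A tangle is a matched pair $(A,B)$, identified with $A\cup B$ and its induced subposet; a clone set is an equivalence class of $\approx$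 on the vertices in no tangle; clone sets and tangles are the parts of $P$. Levels: $L_1$ = minimal elements of $P$, $L_{k+1}$ = minimal elements of $P\setminus(L_1\cup\dots\cup L_k)$, and $\ell(a)=k$ if $a\in L_k$; each clone set lies in a single level and each tangle lies in $L_i\cup L_{i+1}$ for some $i$. A compatible listing is an ordering $(X_1,\dots,X_m)$ of all parts such that for $a\in X_i$, $b\in X_j$, $i\ne j$: $a<b$ iff $\ell(a)\le\ell(b)-2$, or $\ell(a)=\ell(b)-1$ and $i<j$ (compatible listings exist). Let $\Sigma=\{c_1,c_2,\dots\}\cup\{t_{12},t_{23},\dots,t_{i\,i+1},\dots\}$, $\Sigma^*$ the free monoid on $\Sigma$, and $M$ the quotient of $\Sigma^*$ by the commutation relations $c_ic_j=c_jc_i$ if $|i-j|\ge2$; $c_it_{j\,j+1}=t_{j\,j+1}c_i$ if $i\le j-2$ or $i\ge j+3$; $t_{i\,i+1}t_{j\,j+1}=t_{j\,j+1}t_{i\,i+1}$ if $|i-j|\ge3$. The word of a compatible listing replaces each clone set at level $i$ by $c_i$ and each tangle in levels $\{i,i+1\}$ by $t_{i\,i+1}$; the words of all compatible listings of $P$ have the same image in $M$, called the skeleton of $P$. *)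

(* Defs.v *)
(* A finite poset is a finType T with a strict order r : rel T
   (r a b means a < b). *)
From mathcomp Require Import all_boot.
From Stdlib Require Import Relation_Operators.
Set Implicit Arguments.
Unset Strict Implicit.
Unset Printing Implicit Defensive.

Section Poset.
Variables (T : finType) (r : rel T).

Definition strict_order : Prop := irreflexive r /\ transitive r.

Definition incomp (a b : T) : bool := [&& a != b, ~~ r a b & ~~ r b a].

Definition free31 : Prop :=
  ~ exists a b c d : T,
      [&& r a b, r b c, incomp d a, incomp d b & incomp d c].

Definition Dset (a : T) : {set T} := [set x | r x a].
Definition Uset (a : T) : {set T} := [set x | r a x].

Definition top_rel (a b : T) : bool :=
  ~~ (Dset a \subset Dset b) && ~~ (Dset b \subset Dset a).
Definition bot_rel (a b : T) : bool :=
  ~~ (Uset a \subset Uset b) && ~~ (Uset b \subset Uset a).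
Definition approx (a b : T) : bool := (Dset a == Dset b) && (Uset a == Uset b).

Definition is_top (A : {set T}) : bool :=
  (2 <= #|A|) && [exists a, A == [set x | connect top_rel a x]].
Definition is_bot (B : {set T}) : bool :=
  (2 <= #|B|) && [exists b, B == [set x | connect bot_rel b x]].

Definition matched (A B : {set T}) : bool :=
  [exists a1, exists a2, exists b1, exists b2,
     [&& a1 \in A, a2 \in A, b1 \in B, b2 \in B, a1 != a2, b1 != b2,
         r b1 a1, r b2 a2, incomp a1 a2, incomp b1 b2, incomp b1 a2
       & incomp b2 a1]].

(* a tangle, identified with the union A :|: B of a matched top and bottom *)
Definition is_tangle (S : {set T}) : bool :=
  [exists A : {set T}, exists B : {set T},
     [&& is_top A, is_bot B, matched A B & S == A :|: B]].

Definition in_tangle (x : T) : bool := [exists S, is_tangle S && (x \in S)].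

Definition is_clone (S : {set T}) : bool :=
  [exists x, ~~ in_tangle x && (S == [set y | ~~ in_tangle y && approx x y])].

Definition is_part (S : {set T}) : bool := is_clone S || is_tangle S.

(* below k = L_1 :|: ... :|: L_k *)
Fixpoint below (k : nat) : {set T} :=
  match k with
  | 0 => set0
  | k'.+1 => below k' :|:
      [set x | (x \notin below k') &&
               [forall y, (y \notin below k') ==> ~~ r y x]]
  end.

Definition Lev (k : nat) : {set T} := below k :\: below k.-1.

Definition level (a : T) : nat :=
  head 0 [seq k <- iota 1 #|T| | a \in Lev k].

Definition compatible (X : seq {set T}) : Prop :=
  [/\ uniq X, all is_part X, (forall S, is_part S -> S \in X) &
      forall i j, i < size X -> j < size X -> i != j ->
        forall a b, a \in nth set0 X i -> b \in nth set0 X j ->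
          r a b = (level a + 2 <= level b) ||
                  ((level a + 1 == level b) && (i < j))].
End Poset.

(* The alphabet Sigma: C i = c_i, Tl i = t_{i i+1} *)
Inductive letter := C of nat | Tl of nat.

Definition comm_letters (x y : letter) : bool :=
  match x, y with
  | C i, C j => (i + 2 <= j) || (j + 2 <= i)
  | C i, Tl j => (i + 2 <= j) || (j + 3 <= i)
  | Tl j, C i => (i + 2 <= j) || (j + 3 <= i)
  | Tl i, Tl j => (i + 3 <= j) || (j + 3 <= i)
  end.

Inductive trace_step : seq letter -> seq letter -> Prop :=
| TraceStep u v x y : comm_letters x y ->
    trace_step (u ++ x :: y :: v) (u ++ y :: x :: v).

Definition trace_eq : seq letter -> seq letter -> Prop :=
  clos_refl_trans (seq letter) trace_step.

Definition part_letter (T : finType) (r : rel T) (S : {set T}) : letter :=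
  if is_tangle r S then Tl (foldr minn #|T| [seq level r x | x in S])
  else C (odflt 0 (omap (level r) [pick x in S])).

Definition word (T : finType) (r : rel T) (X : seq {set T}) : seq letter :=
  map (part_letter r) X.

Definition same_skeleton (T T' : finType) (r : rel T) (r' : rel T') : Prop :=
  exists X Y, [/\ compatible r X, compatible r' Y & trace_eq (word r X) (word r' Y)].

Definition poset_iso (T T' : finType) (r : rel T) (r' : rel T') : Prop :=
  exists f : T -> T', bijective f /\ forall a b, r a b = r' (f a) (f b).

Definition induced_iso (T T' : finType) (r : rel T) (r' : rel T')
    (X : {set T}) (Y : {set T'}) : Prop :=
  exists f : T -> T', [/\ {in X &, injective f}, f @: X = Y &
                          {in X &, forall a b, r a b = r' (f a) (f b)}].

(* Main.v *)
Require Import Defs.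
From mathcomp Require Import all_boot zify.
From Stdlib Require Import ClassicalEpsilon.
Set Implicit Arguments. Unset Strict Implicit. Unset Printing Implicit Defensive.

Lemma ar_a m p q : m.+1 < p -> p < q -> q < m.+3 -> False.
Proof. lia. Qed.
Lemma ar_b p : 0 < p -> p < 1 -> False.
Proof. lia. Qed.
Lemma ar_c p k : 1 < p -> p < k -> k <= 2 -> False.
Proof. lia. Qed.

Section Levels.
Variables (T : finType) (r : rel T).
Hypothesis so : strict_order r.

Lemma rirr x : r x x = false.
Proof. by case: so => H _; apply: H. Qed.
Lemma rtr x y z : r x y -> r y z -> r x z.
Proof. by case: so => _ H; apply: H. Qed.

Lemma below_S k : below r k.+1 = below r k :|:
      [set x | (x \notin below r k) && [forall y, (y \notin below r k) ==> ~~ r y x]].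
Proof. by []. Qed.

Lemma below_mono k m : k <= m -> below r k \subset below r m.
Proof.
elim: m => [|m IH]; first by rewrite leqn0 => /eqP->.
rewrite leq_eqVlt => /orP[/eqP->//|]; rewrite ltnS => /IH H.
by apply: (subset_trans H); rewrite below_S subsetUl.
Qed.

Lemma memLevS x k : (x \in Lev r k.+1) =
  (x \notin below r k) && [forall y, (y \notin below r k) ==> ~~ r y x].
Proof.
rewrite /Lev below_S !inE.
by case: (x \in below r k) => //=; rewrite andbT.
Qed.

Lemma Lev0 x : x \in Lev r 0 = false.
Proof. by rewrite /Lev /= !inE. Qed.

Lemma Lev_below x k : x \in Lev r k -> x \in below r k.
Proof. by rewrite /Lev inE => /andP[]. Qed.

Lemma Lev_uniq x k m : x \in Lev r k -> x \in Lev r m -> k = m.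
Proof.
wlog lt: k m / k < m.
  move=> W Hk Hm; case: (ltngtP k m) => [h|h|//]; first exact: W.
  by symmetry; apply: W.
case: m lt => // m; rewrite ltnS => le Hk.
rewrite memLevS => /andP[/negP Hn _]; exfalso; apply: Hn.
by apply: (subsetP (below_mono le)); apply: Lev_below.
Qed.

Lemma Lev_down x y k : x \in Lev r k.+1 -> r y x -> y \in below r k.
Proof.
rewrite memLevS => /andP[_ /forallP H] ryx.
by have := H y; case: (y \in below r k) => //=; rewrite ryx.
Qed.

Lemma exists_min (C : {set T}) x : x \in C ->
  exists2 m, m \in C & forall y, y \in C -> ~~ r y m.
Proof.
move=> xC; move: {2}#|[set y in C | r y x]| (leqnn #|[set y in C | r y x]|) => n.
elim: n x xC => [|n IH] x xC hc.
  exists x => // y yC; apply/negP=> ryx.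
  have : 0 < #|[set y in C | r y x]| by apply/card_gt0P; exists y; rewrite inE yC ryx.
  by rewrite ltnNge hc.
case: (boolP [exists y, (y \in C) && r y x]).
  case/existsP=> y /andP[yC ryx]; apply: (IH y yC).
  rewrite -ltnS; apply: leq_trans hc; apply: proper_card.
  apply/properP; split.
    by apply/subsetP=> z; rewrite !inE => /andP[-> /rtr]; move/(_ _ ryx)->.
  by exists y; rewrite !inE ?yC ?ryx ?rirr.
move/existsPn=> H; exists x => // y yC; by have := H y; rewrite yC.
Qed.

Lemma below_full k : below r k = setT \/ k <= #|below r k|.
Proof.
elim: k => [|k [IH|IH]]; [by right| left | ].
  by rewrite below_S IH setTU.
case: (boolP (below r k == setT)) => [/eqP E| NE].
  by left; rewrite below_S E setTU.
right.
have [z zC] : exists z, z \in ~: below r k.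
  have /subsetPn [z _ zn] : ~~ (setT \subset below r k).
    by apply: contra NE => h; rewrite eqEsubset subsetT h.
  by exists z; rewrite inE.
have [m mC mmin] := exists_min zC.
apply: leq_trans (_ : #|below r k|.+1 <= _); first by [].
apply: proper_card; apply/properP; split; first by rewrite below_S subsetUl.
exists m; first by rewrite below_S !inE; rewrite inE in mC; rewrite mC /=;
  apply/orP; right; apply/forallP=> y; apply/implyP=> yn; apply: mmin; rewrite inE.
by rewrite inE in mC.
Qed.

Lemma below_all x : x \in below r #|T|.
Proof.
case: (below_full #|T|) => [->|h]; first by rewrite inE.
have: below r #|T| = setT.
  apply/eqP; rewrite eqEcard subsetT /= cardsT //.
by move->; rewrite inE.
Qed.

Lemma exists_Lev x : exists2 k, 0 < k <= #|T| & x \in Lev r k.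
Proof.
have ex : exists k, x \in below r k by exists #|T|; apply: below_all.
pose k := ex_minn ex.
have kP : x \in below r k by rewrite /k; case: ex_minnP.
have kmin : forall m, x \in below r m -> k <= m by rewrite /k; case: ex_minnP.
have kle : k <= #|T| by apply: kmin; apply: below_all.
case: k kP kmin kle => [|k] kP kmin kle; first by rewrite inE in kP.
exists k.+1; first by rewrite kle.
rewrite /Lev inE kP andbT /=; apply/negP=> /kmin; by rewrite ltnn.
Qed.

Lemma levelE x k : 0 < k <= #|T| -> x \in Lev r k -> level r x = k.
Proof.
move=> /andP[k0 kT] xk; rewrite /level.
have : k \in [seq k <- iota 1 #|T| | x \in Lev r k].
  rewrite mem_filter xk mem_iota /=; case: k k0 kT {xk} => //= k _ kT.
have : all (pred1 k) [seq k <- iota 1 #|T| | x \in Lev r k].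
  by apply/allP=> m; rewrite mem_filter => /andP[/Lev_uniq/(_ xk) -> _] /=.
by case: [seq _ <- _ | _] => //= a s /andP[/eqP->].
Qed.

Lemma levelP x : [/\ 0 < level r x, level r x <= #|T| & x \in Lev r (level r x)].
Proof.
have [k /andP[k0 kT] xk] := exists_Lev x.
by rewrite (levelE (_ : 0 < k <= #|T|) xk) ?k0.
Qed.

Lemma level_gt0 x : 0 < level r x.
Proof. by case: (levelP x). Qed.

Lemma level_lt x y : r y x -> level r y < level r x.
Proof.
move=> ryx; case: (levelP x) => x0 _ xL.
case: (levelP y) => y0 _ yL.
move: xL; case E: (level r x) x0 => [|k] // _ xL.
have yb := Lev_down xL ryx.
rewrite ltnS leqNgt; apply/negP => lt.
move: yL; case E2: (level r y) lt y0 => [|m] // lt _.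
rewrite memLevS => /andP[/negP H _]; apply: H.
by apply: (subsetP (below_mono _)) yb.
Qed.

Lemma level_pred x k : level r x = k.+2 ->
  exists2 y, r y x & level r y = k.+1.
Proof.
move=> E; case: (levelP x) => _ _; rewrite E => xL.
have := xL; rewrite memLevS => /andP[xn _].
move: xn; rewrite below_S !inE negb_or => /andP[xk].
rewrite xk /= => /forallPn[y]; rewrite negb_imply negbK => /andP[yn ryx].
exists y => //; apply: levelE.
  rewrite /=; apply: leq_trans (_ : k.+2 <= _) => //; rewrite -E; by case: (levelP x).
by rewrite /Lev inE yn (Lev_down xL ryx).
Qed.

Lemma incompI d a : d != a -> ~~ r d a -> ~~ r a d -> incomp r d a.
Proof. by move=> *; apply/and3P. Qed.

Hypothesis f31 : free31 r.

Lemma no31 a b c d : r a b -> r b c -> incomp r d a -> incomp r d b -> incomp r d c -> False.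
Proof. move=> *; apply: f31; exists a, b, c, d; by apply/and5P. Qed.

Lemma neq_of x y : r x y -> ~~ r x y = false.
Proof. by move->. Qed.

Ltac neqr H := apply/eqP => E; subst; move: H; rewrite ?rirr //.

Lemma dset_le x a b : r x a -> ~~ r x b -> level r b <= level r a.
Proof.
move=> rxa nxb; rewrite leqNgt; apply/negP => lt.
have la2 : 1 < level r a by apply: leq_trans (level_lt rxa); apply: level_gt0.
have nab : ~~ r a b by apply: contra nxb => h; apply: rtr rxa h.
move E: (level r b) lt => k lt.
case: k E lt => [|[|[|m]]] E lt; try by case: (ar_c la2 lt).
have [c rcb lc] := level_pred E.
have [d rdc ld] := level_pred lc.
have nca : ~~ r c a by apply/negP=> /level_lt; rewrite lc ltnNge -ltnS lt.
have nac : ~~ r a c by apply: contra nab => h; apply: rtr h rcb.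
have nba : ~~ r b a by apply/negP=> /level_lt; rewrite E ltnNge ltnW.
have rda : r d a.
  apply/negPn/negP => nda; apply: (no31 (d:=a) rdc rcb).
  - apply: incompI => //; last by apply: contra nac => h; apply: rtr h rdc.
    by apply/eqP=> E1; subst; rewrite rdc in nac.
  - by apply: incompI => //; apply/eqP=> E1; subst; rewrite rcb in nab.
  - by apply: incompI => //; apply/eqP=> E1; subst; rewrite rxa in nxb.
have nxc : ~~ r x c by apply: contra nxb => h; apply: rtr h rcb.
have rdx : r d x.
  apply/negPn/negP => ndx; apply: (no31 (d:=x) rdc rcb).
  - apply: incompI => //; last by apply: contra nxc => h; apply: rtr h rdc.
    by apply/eqP=> E1; subst; rewrite rdc in nxc.
  - apply: incompI => //; last by apply: contra nca => h; apply: rtr h rxa.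
    by apply/eqP=> E1; subst; rewrite rcb in nxb.
  - apply: incompI => //; last by apply: contra nba => h; apply: rtr h rxa.
    by apply/eqP=> E1; subst; rewrite rxa in nba.
have := level_lt rdx; have := level_lt rxa; rewrite ld => h1 h2.
by case: (ar_a h2 h1 lt).
Qed.

Lemma uset_le a b y : r b y -> ~~ r a y -> level r b <= level r a.
Proof.
move=> rby nay; rewrite leqNgt; apply/negP => lt.
have nab : ~~ r a b by apply: contra nay => h; apply: rtr h rby.
have nba : ~~ r b a by apply/negP=> /level_lt; rewrite ltnNge ltnW.
move E: (level r b) lt => k lt.
case: k E lt => [|[|m]] E lt; first by rewrite ltn0 in lt.
  by case: (ar_b (level_gt0 a) lt).
have [c rcb lc] := level_pred E.
apply: (no31 (d:=a) rcb rby).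
- apply: incompI.
  + by apply/eqP=> E1; subst; rewrite rcb in nab.
  + by apply: contra nab => h; apply: rtr h rcb.
  + by apply/negP=> /level_lt; rewrite lc ltnNge -ltnS lt.
- by apply: incompI => //; apply/eqP=> E1; subst; rewrite rby in nay.
- apply: incompI => //; last by apply: contra nba => /(rtr rby).
  by apply/eqP=> E1; subst; rewrite rby in nba.
Qed.

Lemma nrl p q : level r p = level r q -> r p q = false.
Proof. by move=> E; apply/negP=> /level_lt; rewrite E ltnn. Qed.

Lemma top_sym a b : top_rel r a b = top_rel r b a.
Proof. by rewrite /top_rel andbC. Qed.
Lemma bot_sym a b : bot_rel r a b = bot_rel r b a.
Proof. by rewrite /bot_rel andbC. Qed.

Lemma top_wit a b : top_rel r a b -> exists x, r x a /\ ~~ r x b.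
Proof.
case/andP=> /subsetPn[x]; rewrite !inE => h1 h2 _; by exists x.
Qed.
Lemma bot_wit a b : bot_rel r a b -> exists x, r a x /\ ~~ r b x.
Proof.
case/andP=> /subsetPn[x]; rewrite !inE => h1 h2 _; by exists x.
Qed.

Lemma top_level a b : top_rel r a b -> level r a = level r b.
Proof.
move=> t; have t' := t; rewrite top_sym in t'.
have [x [h1 h2]] := top_wit t; have [y [h3 h4]] := top_wit t'.
by apply/eqP; rewrite eqn_leq (dset_le h1 h2) (dset_le h3 h4).
Qed.

Lemma bot_level a b : bot_rel r a b -> level r a = level r b.
Proof.
move=> t; have t' := t; rewrite bot_sym in t'.
have [x [h1 h2]] := bot_wit t; have [y [h3 h4]] := bot_wit t'.
by apply/eqP; rewrite eqn_leq (uset_le h1 h2) (uset_le h3 h4).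
Qed.

Lemma top_bot x x' x'' : top_rel r x x' -> bot_rel r x x'' -> False.
Proof.
move=> t b.
have l1 := top_level t; have l2 := bot_level b.
have [u [rux nux']] := top_wit t.
have [v [rvx' nvx]] : exists v, r v x' /\ ~~ r v x by apply: top_wit; rewrite top_sym.
have [w [rxw nx''w]] := bot_wit b.
have [z [rx''z nxz]] : exists z, r x'' z /\ ~~ r x z by apply: bot_wit; rewrite bot_sym.
have rx'w : r x' w.
  apply/negPn/negP => nx'w; apply: (no31 (d:=x') rux rxw).
  - apply: incompI => //.
    + by apply/eqP=> E; subst; rewrite nrl in rux.
    + by apply/negP=> h; have := rtr h rux; rewrite nrl.
  - apply: incompI; last by rewrite nrl.
    + by apply/eqP=> E; subst; rewrite rux in nux'.
    + by rewrite nrl.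
  - apply: incompI => //.
    + by apply/eqP=> E; subst; rewrite nrl in rxw.
    + by apply/negP=> h; have := rtr rxw h; rewrite nrl.
have rvx'' : r v x''.
  apply/negPn/negP => nvx''; apply: (no31 (d:=x'') rvx' rx'w).
  - apply: incompI => //.
    + by apply/eqP=> E; subst; move: rvx'; rewrite nrl // -l1.
    + by apply/negP=> /level_lt h; have := ltn_trans h (level_lt rvx'); rewrite -l1 -l2 ltnn.
  - apply: incompI; last by rewrite nrl // -l1.
    + by apply/eqP=> E; subst; rewrite rx'w in nx''w.
    + by rewrite nrl // -l2.
  - apply: incompI => //.
    + by apply/eqP=> E; subst; rewrite nrl in rxw.
    + by apply/negP=> h; have := rtr rxw h; rewrite nrl.
apply: (no31 (d:=x) rvx'' rx''z).
- apply: incompI => //.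
  + by apply/eqP=> E; subst; rewrite nrl in rvx'.
  + by apply/negP=> /level_lt h; have := ltn_trans h (level_lt rvx'); rewrite -l1 ltnn.
- apply: incompI; last by rewrite nrl.
  + by apply/eqP=> E; subst; rewrite rxw in nx''w.
  + by rewrite nrl.
- apply: incompI => //.
  + by apply/eqP=> E; subst; rewrite nrl in rx''z.
  + by apply/negP=> h; have := rtr rx''z h; rewrite nrl.
Qed.

Lemma csym_top : connect_sym (top_rel r).
Proof. by apply: sym_connect_sym => a b; rewrite top_sym. Qed.
Lemma csym_bot : connect_sym (bot_rel r).
Proof. by apply: sym_connect_sym => a b; rewrite bot_sym. Qed.

Lemma connect_level (e : rel T) a b :
  (forall u v, e u v -> level r u = level r v) -> connect e a b -> level r a = level r b.
Proof.
move=> H /connectP[p]; elim: p a => [|c p IH] a /=; first by move=> _ ->.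
by case/andP=> /H -> /IH.
Qed.

Lemma connect_nb (e : rel T) a x x' : connect_sym e ->
  connect e a x -> connect e a x' -> x != x' -> exists y, e x y.
Proof.
move=> cs ax ax' ne.
have : connect e x x' by apply: connect_trans ax'; rewrite cs.
case/connectP=> [[|y p]] /=; first by move=> _ E; rewrite E eqxx in ne.
by case/andP=> h _ _; exists y.
Qed.

Lemma two_elems (A : {set T}) x : 2 <= #|A| -> x \in A -> exists2 x', x' \in A & x != x'.
Proof.
move=> c xA.
have : 0 < #|A :\ x| by rewrite (cardsD1 x A) xA in c.
case/card_gt0P=> x'; rewrite !inE => /andP[h1 h2]; exists x' => //.
by rewrite eq_sym.
Qed.

Lemma match_up (B : {set T}) u v :
  (forall b y, b \in B -> bot_rel r b y -> y \in B) ->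
  connect (top_rel r) u v -> (exists2 b, b \in B & r b u) -> exists2 b, b \in B & r b v.
Proof.
move=> Bcl /connectP[p]; elim: p u => [|w p IH] u /=; first by move=> _ ->.
case/andP=> tuw pw lv [b bB rbu]; apply: (IH w pw lv).
case: (boolP (r b w)) => rbw; first by exists b.
have [y [ryw nyu]] : exists y, r y w /\ ~~ r y u by apply: top_wit; rewrite top_sym.
exists y => //; apply: (Bcl b) => //.
apply/andP; split; apply/subsetPn.
  by exists u; rewrite !inE.
by exists w; rewrite !inE.
Qed.

Lemma match_down (A : {set T}) u v :
  (forall a y, a \in A -> top_rel r a y -> y \in A) ->
  connect (bot_rel r) u v -> (exists2 a, a \in A & r u a) -> exists2 a, a \in A & r v a.
Proof.
move=> Acl /connectP[p]; elim: p u => [|w p IH] u /=; first by move=> _ ->.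
case/andP=> tuw pw lv [a aA rua]; apply: (IH w pw lv).
case: (boolP (r w a)) => rwa; first by exists a.
have [y [rwy nuy]] : exists y, r w y /\ ~~ r u y by apply: bot_wit; rewrite bot_sym.
exists y => //; apply: (Acl a) => //.
apply/andP; split; apply/subsetPn.
  by exists u; rewrite !inE.
by exists w; rewrite !inE.
Qed.

Lemma tangle_sum S : is_tangle r S -> exists l, [/\
  exists2 x, x \in S & level r x = l,
  forall x, x \in S -> level r x = l \/ level r x = l.+1,
  forall x, x \in S -> level r x = l.+1 -> (exists y, top_rel r x y) /\ exists2 y, y \in S & r y x &
  forall x, x \in S -> level r x = l -> (exists y, bot_rel r x y) /\ exists2 y, y \in S & r x y].
Proof.
case/existsP=> A /existsP[B] /and4P[/andP[cA /existsP[a0 /eqP EA]]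
  /andP[cB /existsP[b0 /eqP EB]] mAB /eqP ->].
case/existsP: mAB => a1 /existsP[a2 /existsP[b1 /existsP[b2 H]]].
case/andP: H => a1A /andP[a2A /andP[b1B /andP[b2B /andP[_ /andP[_ /andP[rba1 /andP[rba2 /andP[_ /andP[_ /andP[ib1a2 _]]]]]]]]]].
have lA : forall x, x \in A -> level r x = level r a0.
  by move=> x; rewrite EA inE => /(connect_level top_level).
have lB : forall x, x \in B -> level r x = level r b0.
  by move=> x; rewrite EB inE => /(connect_level bot_level).
have Bcl : forall b y, b \in B -> bot_rel r b y -> y \in B.
  move=> b y; rewrite EB !inE => h1 h2; apply: connect_trans h1 _; exact: connect1.
have Acl : forall b y, b \in A -> top_rel r b y -> y \in A.
  move=> b y; rewrite EA !inE => h1 h2; apply: connect_trans h1 _; exact: connect1.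
have lAB : level r a0 = (level r b0).+1.
  have := level_lt rba1; rewrite (lA _ a1A) (lB _ b1B) => lt.
  apply/eqP; rewrite eqn_leq lt andbT leqNgt; apply/negP => lt2.
  case E: (level r a2) => [|[|k]].
  - by move: (level_gt0 a2); rewrite E.
  - by move: E; rewrite (lA _ a2A) => E; rewrite E in lt; case: (ar_b (level_gt0 b0) lt).
  have [c rca2 lc] := level_pred E.
  have ha : level r a2 = level r a0 := lA _ a2A.
  case/and3P: ib1a2 => nb1a2 nrb1a2 nra2b1.
  have hb0 := level_gt0 b0.
  case: k E lc ha => [|k] E lc ha.
    by move: lt2 hb0; rewrite -ha E; case: (level r b0).
  have [d rdc ld] := level_pred lc.
  apply: (no31 (d:=b1) rdc rca2).
  - apply: incompI.
    + by apply/eqP=> E1; subst; rewrite (rtr rdc rca2) in nrb1a2.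
    + by apply: contra nrb1a2 => h; apply: rtr (rtr h rdc) rca2.
    + by apply/negP=> /level_lt; rewrite (lB _ b1B) ld => h; move: lt2; rewrite -ha E !ltnS leqNgt h.
  - apply: incompI.
    + by apply/eqP=> E1; subst; rewrite rca2 in nrb1a2.
    + by apply: contra nrb1a2 => h; apply: rtr h rca2.
    + by apply/negP=> /level_lt; rewrite (lB _ b1B) lc => h; move: lt2; rewrite -ha E !ltnS leqNgt (ltnW h).
  - by apply: incompI.
exists (level r b0); split.
- by exists b0 => //; rewrite inE EB inE connect0 orbT.
- move=> x /setUP[/lA|/lB] ->; by [right|left].
- move=> x /setUP[xA|xB] lx; last by move: lx; rewrite (lB _ xB) => /n_Sn.
  split.
    have [x' x'A ne] := two_elems cA xA.
    by apply: (connect_nb csym_top (a:=a0) _ _ ne); [move: xA | move: x'A]; rewrite EA inE.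
  have [b bB rbx] : exists2 b, b \in B & r b x.
    apply: (match_up Bcl (u:=a1)); last by exists b1.
    by apply: (connect_trans (y:=a0)); [rewrite csym_top; move: a1A | move: xA]; rewrite EA inE.
  by exists b => //; rewrite inE bB orbT.
- move=> x /setUP[xA|xB] lx; first by move: lx; rewrite (lA _ xA) lAB => /esym/n_Sn.
  split.
    have [x' x'A ne] := two_elems cB xB.
    by apply: (connect_nb csym_bot (a:=b0) _ _ ne); [move: xB | move: x'A]; rewrite EB inE.
  have [a aA rxa] : exists2 a, a \in A & r x a.
    apply: (match_down Acl (u:=b1)); last by exists a1.
    by apply: (connect_trans (y:=b0)); [rewrite csym_bot; move: b1B | move: xB]; rewrite EB inE.
  by exists a => //; rewrite inE aA.
Qed.
End Levels.

Lemma foldr_minn_ge (l n : nat) s : l <= n -> all (fun k => l <= k) s -> l <= foldr minn n s.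
Proof.
move=> ln; elim: s => //= a s IH /andP[la /IH h]; by rewrite leq_min la h.
Qed.

Lemma foldr_minn_eq (l n : nat) s : l <= n -> all (fun k => l <= k) s -> l \in s ->
  foldr minn n s = l.
Proof.
move=> ln; elim: s => //= a s IH /andP[la al]; rewrite inE => /orP[/eqP<-|ls].
  by apply/minn_idPl; apply: foldr_minn_ge.
by rewrite IH //; apply/minn_idPr.
Qed.

Section Parts.
Variables (T : finType) (r : rel T).
Hypothesis so : strict_order r.
Hypothesis f31 : free31 r.

Lemma dset_level a b : Dset r a = Dset r b -> level r a = level r b.
Proof.
wlog lt : a b / level r a < level r b.
  move=> W E; case: (ltngtP (level r a) (level r b)) => [h|h|//].
    by apply: W.
  by symmetry; apply: W.
move=> E; exfalso.
move Eb: (level r b) lt => k lt.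
case: k Eb lt => [|[|k]] Eb lt; first by rewrite ltn0 in lt.
  by move: lt; rewrite ltnS leqn0 => /eqP h; have := level_gt0 so a; rewrite h.
have [c rcb lc] := level_pred so Eb.
have : c \in Dset r b by rewrite inE.
rewrite -E inE => /(level_lt so); rewrite lc ltnNge.
by rewrite -ltnS lt.
Qed.

Lemma approx_trans a b c : approx r a b -> approx r b c -> approx r a c.
Proof. by case/andP=> /eqP E1 /eqP E2 /andP[/eqP E3 /eqP E4]; rewrite /approx E1 E2 E3 E4 !eqxx. Qed.
Lemma approx_sym a b : approx r a b -> approx r b a.
Proof. by case/andP=> /eqP E1 /eqP E2; rewrite /approx E1 E2 !eqxx. Qed.
Lemma approx_refl a : approx r a a.
Proof. by rewrite /approx !eqxx. Qed.

Lemma clone_facts S : is_clone r S -> exists2 x, x \in S &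
  [/\ forall y, y \in S -> level r y = level r x,
      forall a b, a \in S -> b \in S -> r a b = false &
      forall y, y \in S -> ~~ in_tangle r y].
Proof.
case/existsP=> x /andP[nx /eqP ->].
exists x; first by rewrite inE nx approx_refl.
split.
- by move=> y; rewrite inE => /andP[_ /andP[/eqP E _]]; apply: dset_level.
- move=> a b; rewrite !inE => /andP[_ /andP[/eqP Ea _]] /andP[_ /andP[/eqP Eb _]].
  apply/negP=> rab.
  have : a \in Dset r b by rewrite inE.
  by rewrite -Eb Ea inE (rirr so).
- by move=> y; rewrite inE => /andP[].
Qed.

Lemma part_cover x : exists2 S, is_part r S & x \in S.
Proof.
case: (boolP (in_tangle r x)).
  case/existsP=> S /andP[t xS]; exists S => //; by rewrite /is_part t orbT.
move=> nx; exists [set y | ~~ in_tangle r y && approx r x y].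
  by rewrite /is_part; apply/orP; left; apply/existsP; exists x; rewrite nx eqxx.
by rewrite inE nx approx_refl.
Qed.

Lemma in_tangle_of S x : is_tangle r S -> x \in S -> in_tangle r x.
Proof. by move=> t xS; apply/existsP; exists S; rewrite t xS. Qed.

Lemma clone_not_tangle S : is_clone r S -> is_tangle r S = false.
Proof.
move=> /clone_facts[x xS [_ _ H]]; case t: (is_tangle r S) => //.
by move: (H x xS); rewrite (in_tangle_of t xS).
Qed.

Lemma compat_adj X i j a b : compatible r X -> i < size X -> j < size X -> i != j ->
  a \in nth set0 X i -> b \in nth set0 X j -> r a b -> (level r a).+1 = level r b -> i < j.
Proof.
case=> _ _ _ H hi hj ij aS bS rab E.
move: (H i j hi hj ij a b aS bS); rewrite rab -E addn2 ltnn addn1 eqxx /=.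
by move<-.
Qed.

Lemma tangle_lv (S : {set T}) l x y : (forall x, x \in S -> level r x = l \/ level r x = l.+1) ->
  x \in S -> y \in S -> r x y -> level r x = l /\ level r y = l.+1.
Proof.
move=> H xS yS rxy; have := level_lt so rxy.
by case: (H x xS) => ->; case: (H y yS) => ->; rewrite ?ltnn ?ltnS ?ltnn // ltnNge leqnSn.
Qed.

Lemma tangle_adj (S : {set T}) l x y : (forall x, x \in S -> level r x = l \/ level r x = l.+1) ->
  x \in S -> y \in S -> r x y -> (level r x).+1 = level r y.
Proof. by move=> H xS yS rxy; case: (tangle_lv H xS yS rxy) => -> ->. Qed.

Lemma disjoint_parts X p q x : compatible r X -> p < size X -> q < size X ->
  x \in nth set0 X p -> x \in nth set0 X q -> p = q.
Proof.
move=> cX hp hq xp xq; apply/eqP/negPn/negP => pq.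
have cX' := cX; case: cX' => uX aX _ _.
have pp : is_part r (nth set0 X p) by apply: (allP aX); rewrite mem_nth.
have pq' : is_part r (nth set0 X q) by apply: (allP aX); rewrite mem_nth.
case/orP: pp => [cp|tp]; case/orP: pq' => [cq|tq].
- move: pq; rewrite -(nth_uniq set0 hp hq uX) => /eqP; apply.
  case/existsP: cp => x1 /andP[_ /eqP Ep]; case/existsP: cq => x2 /andP[_ /eqP Eq].
  rewrite Ep Eq; move: xp xq; rewrite Ep Eq !inE => /andP[_ a1] /andP[_ a2].
  apply/setP=> y; rewrite !inE; case: (~~ in_tangle r y) => //=.
  apply/idP/idP => h.
    by apply: approx_trans a2 (approx_trans (approx_sym a1) h).
  by apply: approx_trans a1 (approx_trans (approx_sym a2) h).
- have [z zS [_ _ H]] := clone_facts cp; by move: (H x xp); rewrite (in_tangle_of tq xq).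
- have [z zS [_ _ H]] := clone_facts cq; by move: (H x xq); rewrite (in_tangle_of tp xp).
have [lp [_ Lp Ap Bp]] := tangle_sum so f31 tp.
have [lq [_ Lq Aq Bq]] := tangle_sum so f31 tq.
have qp : q != p by rewrite eq_sym.
case: (Lp x xp) => lxp.
  have [[y1 b1] [y yp rxy]] := Bp x xp lxp.
  case: (Lq x xq) => lxq.
    have [_ [y' yq rxy']] := Bq x xq lxq.
    have h1 := compat_adj cX hp hq pq xp yq rxy'
      (tangle_adj Lq xq yq rxy').
    have h2 := compat_adj cX hq hp qp xq yp rxy
      (tangle_adj Lp xp yp rxy).
    by move: (ltn_trans h1 h2); rewrite ltnn.
  have [[y2 t2] _] := Aq x xq lxq.
  by case: (top_bot so f31 t2 b1).
have [[y1 t1] [y yp ryx]] := Ap x xp lxp.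
case: (Lq x xq) => lxq.
  have [[y2 b2] _] := Bq x xq lxq.
  by case: (top_bot so f31 t1 b2).
have [_ [y' yq ryx']] := Aq x xq lxq.
have h1 := compat_adj cX hq hp qp yq xp ryx'
  (tangle_adj Lq yq xq ryx').
have h2 := compat_adj cX hp hq pq yp xq ryx
  (tangle_adj Lp yp xp ryx).
by move: (ltn_trans h1 h2); rewrite ltnn.
Qed.
End Parts.

Section Letters.
Variables (T : finType) (r : rel T).
Hypothesis so : strict_order r.
Hypothesis f31 : free31 r.

Lemma letter_clone S : is_clone r S -> exists2 x, x \in S &
  part_letter r S = C (level r x) /\ forall y, y \in S -> level r y = level r x.
Proof.
move=> cS; have [x xS [Lv _ _]] := clone_facts so cS.
exists x => //; split => //.
rewrite /part_letter (clone_not_tangle so cS).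
by case: pickP => [y yS|/(_ x)]; rewrite ?xS //= Lv.
Qed.

Definition tsum (S : {set T}) l := [/\
  exists2 x, x \in S & level r x = l,
  forall x, x \in S -> level r x = l \/ level r x = l.+1,
  forall x, x \in S -> level r x = l.+1 -> (exists y, top_rel r x y) /\ exists2 y, y \in S & r y x &
  forall x, x \in S -> level r x = l -> (exists y, bot_rel r x y) /\ exists2 y, y \in S & r x y].

Lemma letter_tangle S : is_tangle r S -> exists l, part_letter r S = Tl l /\ tsum S l.
Proof.
move=> t; have [l H] := tangle_sum so f31 t; exists l; split => //.
rewrite /part_letter t; congr Tl.
case: H => [[x xS lx] Lv _ _].
apply: foldr_minn_eq.
- by rewrite -lx; case: (levelP so x).
- apply/allP=> k /imageP[y yS ->]; by case: (Lv y yS) => ->.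
- by rewrite -lx; apply: image_f.
Qed.
End Letters.

Lemma ar_d p q l : p < q -> q <= l.+1 -> p = l \/ p = l.+1 -> p = l.
Proof. lia. Qed.
Lemma ar_e p q l : q < p -> l <= q -> p = l \/ p = l.+1 -> p = l.+1.
Proof. lia. Qed.

Section Two.
Variables (T T' : finType) (r : rel T) (r' : rel T').
Hypothesis so : strict_order r.
Hypothesis f31 : free31 r.
Hypothesis so' : strict_order r'.
Hypothesis f31' : free31 r'.

Lemma part_bij (S : {set T}) (S' : {set T'}) : is_part r S -> is_part r' S' ->
  part_letter r S = part_letter r' S' ->
  (is_clone r S -> #|S| = #|S'|) -> (is_tangle r S -> induced_iso r r' S S') ->
  exists g : T -> T', [/\ {in S &, injective g}, g @: S = S',
     {in S &, forall a b, r a b = r' (g a) (g b)} &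
     {in S, forall a, level r' (g a) = level r a}].
Proof.
move=> pS pS' EL Hc Ht.
case tS: (is_tangle r S).
  have [l [El [_ Lv Au Bu]]] := letter_tangle so f31 tS.
  case tS': (is_tangle r' S'); last first.
    case/orP: pS' => [cS'|]; last by rewrite tS'.
    have [x _ [E _]] := letter_clone so' cS'; by rewrite El E in EL.
  have [l' [El' [_ Lv' _ _]]] := letter_tangle so' f31' tS'.
  move: EL; rewrite El El' => -[Ell]; subst l'.
  have [g [gi gim gr]] := Ht tS.
  have gS : forall a, a \in S -> g a \in S' by move=> a aS; rewrite -gim imset_f.
  exists g; split => // a aS.
  have Lvle : forall z, z \in S' -> l <= level r' z /\ level r' z <= l.+1.
    by move=> z zS; case: (Lv' z zS) => ->; rewrite leqnn leqnSn.
  case: (Lv a aS) => la; rewrite la.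
    have [_ [y yS ray]] := Bu a aS la.
    have := level_lt so' (r := r') (x := g y) (y := g a); rewrite -gr // => /(_ ray) h.
    exact: ar_d h (proj2 (Lvle _ (gS y yS))) (Lv' _ (gS a aS)).
  have [_ [y yS rya]] := Au a aS la.
  have := level_lt so' (r := r') (x := g a) (y := g y); rewrite -gr // => /(_ rya) h.
  exact: ar_e h (proj1 (Lvle _ (gS y yS))) (Lv' _ (gS a aS)).
have cS : is_clone r S by case/orP: pS => //; rewrite tS.
have [x xS [Ex LvS]] := letter_clone so cS.
have [_ _ [_ rS _]] := clone_facts so cS.
have cS' : is_clone r' S'.
  case/orP: pS' => // tS'; have [l [El _]] := letter_tangle so' f31' tS'.
  by rewrite Ex El in EL.
have [x' x'S [Ex' LvS']] := letter_clone so' cS'.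
have [_ _ [_ rS' _]] := clone_facts so' cS'.
have card := Hc cS.
pose g a := nth x' (enum S') (index a (enum S)).
have gS : forall a, a \in S -> g a \in S'.
  move=> a aS; rewrite -mem_enum /g; apply: mem_nth.
  by rewrite -cardE -card cardE index_mem mem_enum.
have gi : {in S &, injective g}.
  move=> a b aS bS; rewrite /g => /eqP.
  rewrite nth_uniq ?enum_uniq -?cardE -?card ?cardE ?index_mem ?mem_enum // => /eqP E.
  by rewrite -(nth_index a (_ : a \in enum S)) ?E ?nth_index ?mem_enum.
exists g; split => //.
- apply/eqP; rewrite eqEcard; apply/andP; split.
    by apply/subsetP=> y /imsetP[a aS ->]; apply: gS.
  by rewrite (card_in_imset gi) card.
- by move=> a b aS bS; rewrite rS // rS' ?gS.
- move=> a aS; rewrite (LvS' _ (gS a aS)) (LvS a aS).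
  by move: EL; rewrite Ex Ex' => -[].
Qed.
End Two.

Lemma find_part (T : finType) (r : rel T) (X : seq {set T}) (x : T) :
  strict_order r -> compatible r X ->
  find (fun S : {set T} => x \in S) X < size X /\ x \in nth set0 X (find (fun S : {set T} => x \in S) X).
Proof.
move=> so cX; have [S pS xS] := part_cover r x.
have hs : has (fun S : {set T} => x \in S) X by apply/hasP; exists S => //; case: cX => _ _ H _; apply: H.
split; first by rewrite -has_find.
exact: (nth_find set0 hs).
Qed.

Theorem corollary3p10 (T T' : finType) (r : rel T) (r' : rel T')
  (X : seq {set T}) (Y : seq {set T'}) :
  strict_order r -> strict_order r' -> free31 r -> free31 r' ->
  same_skeleton r r' ->
  compatible r X -> compatible r' Y -> word r X = word r' Y ->
  (forall i, i < size X ->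
     (is_clone r (nth set0 X i) -> #|nth set0 X i| = #|nth set0 Y i|) /\
     (is_tangle r (nth set0 X i) -> induced_iso r r' (nth set0 X i) (nth set0 Y i))) ->
  poset_iso r r'.
Proof.
move=> so so' f31 f31' _ cX cY EW Hp.
have sz : size X = size Y.
  by rewrite -(size_map (part_letter r) X) -(size_map (part_letter r') Y); exact: (congr1 size EW).
have EL : forall i, i < size X -> part_letter r (nth set0 X i) = part_letter r' (nth set0 Y i).
  move=> i hi; rewrite -(nth_map set0 (C 0)) // -(nth_map set0 (C 0)) -?sz //.
  exact: (congr1 (fun s => nth (C 0) s i) EW).
have bij : forall i : 'I_(size X), exists g : T -> T',
  [/\ {in nth set0 X i &, injective g}, g @: nth set0 X i = nth set0 Y i,
     {in nth set0 X i &, forall a b, r a b = r' (g a) (g b)} &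
     {in nth set0 X i, forall a, level r' (g a) = level r a}].
  move=> [i hi] /=; case: (Hp i hi) => h1 h2.
  apply: part_bij => //.
  - by case: cX => _ aX _ _; apply: (allP aX); rewrite mem_nth.
  - by case: cY => _ aY _ _; apply: (allP aY); rewrite mem_nth -?sz.
  - exact: EL.
pose G (i : 'I_(size X)) := proj1_sig (constructive_indefinite_description _ (bij i)).
have GP : forall i, _ := fun i => proj2_sig (constructive_indefinite_description _ (bij i)).
pose pX x := find (fun S : {set T} => x \in S) X.
have pXlt : forall x, pX x < size X by move=> x; case: (find_part x so cX).
have pXin : forall x, x \in nth set0 X (pX x) by move=> x; case: (find_part x so cX).
pose F x := G (Ordinal (pXlt x)) x.
have key : forall (i : 'I_(size X)) x, x \in nth set0 X i -> F x = G i x.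
  move=> i x xi; rewrite /F; congr G; apply: val_inj => /=.
  by apply: (disjoint_parts so f31 cX) => //.
have FY : forall x, F x \in nth set0 Y (pX x).
  move=> x; case: (GP (Ordinal (pXlt x))) => _ gim _ _.
  by move: (imset_f (G (Ordinal (pXlt x))) (pXin x)); rewrite gim.
have Flev : forall x, level r' (F x) = level r x.
  by move=> x; case: (GP (Ordinal (pXlt x))) => _ _ _ gl; rewrite /F gl.
have Finj : injective F.
  move=> a b E.
  have e : pX a = pX b.
    apply: (disjoint_parts so' f31' cY (x := F a)); rewrite -?sz //.
    by rewrite E.
  have bi : b \in nth set0 X (Ordinal (pXlt a)) by rewrite /= e.
  move: E; rewrite (key _ b bi) /F.
  by case: (GP (Ordinal (pXlt a))) => gi _ _ _; apply: gi.
have Fsurj : forall y, exists x, y = F x.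
  move=> y; have [hq yq] := find_part y so' cY.
  rewrite -sz in hq; pose i := Ordinal hq.
  case: (GP i) => _ gim _ _.
  have : y \in G i @: nth set0 X i by rewrite gim.
  case/imsetP=> x xi ->; exists x; by rewrite (key i x xi).
exists F; split.
  apply: inj_card_bij => //.
  apply: (@leq_trans #|codom F|); last by rewrite card_codom.
  apply: subset_leq_card; apply/subsetP => y _.
  by have [x ->] := Fsurj y; apply: codom_f.
move=> a b.
case: (eqVneq (pX a) (pX b)) => e.
  have bi : b \in nth set0 X (Ordinal (pXlt a)) by rewrite /= e.
  rewrite (key _ b bi) /F.
  by case: (GP (Ordinal (pXlt a))) => _ _ gr _; apply: gr.
case: cX => _ _ _ HX; case: cY => _ _ _ HY.
rewrite (HX (pX a) (pX b) (pXlt a) (pXlt b) e a b (pXin a) (pXin b)).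
by rewrite (HY (pX a) (pX b)) ?FY -?sz ?pXlt // !Flev.
Qed.
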